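(* Let $n,d\ge1$ be integers and let $A$ be a non-empty subset of $]n[=\{1,\dots,n\}$. If $s_A(\mathbb{Z}_n^d)=d_A(\mathbb{Z}_n^d)+n-1$, then $ZS_A(\mathbb{Z}_n^d)=d_A(\mathbb{Z}_n^d)+n^d-1$.
   Context: For an integer $x\ge1$, $]x[=\{1,2,\dots,x\}$. Let $G$ be a finite abelian group (written additively) of exponent $n$ and let $\emptyset\ne A\subseteq\,]n[$. The constant $d_A(G)$ is the least positive integer $t$ such that for every sequence $g_1,\dots,g_t$ in $G$ there exist $\ell\ge1$, indices $1\le i_1<\dots<i_\ell\le t$ and $a_1,\dots,a_\ell\in A$ (repetitions allowed) with $\sum_{j=1}^{\ell}a_jg_{i_j}=0$. The constant $ZS_A(G)$ (resp. $s_A(G)$) is the least positive integer $t$ such that every sequence $g_1,\dots,g_t$ in $G$ has a subsequence $g_{i_1},\dots,g_{i_m}$ ($i_1<\dots<i_m$) with $m=|G|$ (resp. $m=n$) and elements $a_1,\dots,a_m\in A$ (repetitions allowed) with $\sum_{j=1}^m a_jg_{i_j}=0$ in $G$. *)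

(* Defs.v *)
From mathcomp Require Import all_boot.
Set Implicit Arguments. Unset Strict Implicit. Unset Printing Implicit Defensive.

(* A weighted sum \sum a_j g_j is zero in Z_n^d iff every coordinate of the
   integer sum is divisible by n. *)
Definition Zn_d (n d : nat) := {ffun 'I_d -> 'I_n}.

Definition A_zero_sum (n d : nat) (A : seq nat) (t : nat)
    (g : 'I_t -> Zn_d n d) (I : {set 'I_t}) : Prop :=
  exists a : 'I_t -> nat,
    (forall i, i \in I -> a i \in A) /\
    (forall k : 'I_d, n %| \sum_(i in I) a i * nat_of_ord (g i k)).

Definition dA_prop (n d : nat) (A : seq nat) (t : nat) : Prop :=
  forall g : 'I_t -> Zn_d n d,
    exists I : {set 'I_t}, I != set0 /\ A_zero_sum A g I.

Definition len_prop (n d : nat) (A : seq nat) (m t : nat) : Prop :=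
  forall g : 'I_t -> Zn_d n d,
    exists I : {set 'I_t}, #|I| = m /\ A_zero_sum A g I.

Definition least_pos (P : nat -> Prop) (t : nat) : Prop :=
  0 < t /\ P t /\ forall t', 0 < t' -> P t' -> t <= t'.

Definition is_dA (n d : nat) (A : seq nat) (t : nat) : Prop :=
  least_pos (@dA_prop n d A) t.
(* s_A(Z_n^d): subsequences of length n = exponent of Z_n^d *)
Definition is_sA (n d : nat) (A : seq nat) (t : nat) : Prop :=
  least_pos (@len_prop n d A n) t.
(* ZS_A(Z_n^d): subsequences of length |G| = n^d *)
Definition is_ZSA (n d : nat) (A : seq nat) (t : nat) : Prop :=
  least_pos (@len_prop n d A (n ^ d)) t.

(* Main.v *)
Require Import Defs.
From mathcomp Require Import all_boot.
From mathcomp Require Import zify.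
From Stdlib Require Import Classical.

Lemma restrict n d A m t t' (Hp : len_prop n d A m t) (g : 'I_t' -> Zn_d n d)
  (U : {set 'I_t'}) : t <= #|U| ->
  exists I : {set 'I_t'}, I \subset U /\ #|I| = m /\ A_zero_sum A g I.
Proof.
move=> le.
pose h (j : 'I_t) : 'I_t' := enum_val (widen_ord le j).
have hinj : injective h.
  move=> x y /enum_val_inj/(congr1 val) /= E; exact: val_inj.
have [J [cJ [a [Ha Hs]]]] := Hp (fun j => g (h j)).
exists (h @: J); split.
  apply/subsetP => _ /imsetP [j _ ->]; apply: enum_valP.
split; first by rewrite card_imset.
pose a' i := if [pick j in J | h j == i] is Some j then a j else 0.
have Ea : forall j, j \in J -> a' (h j) = a j.
  move=> j jJ; rewrite /a'; case: pickP => [j' /andP [_ /eqP/hinj -> //]|/(_ j)].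
  by rewrite jJ eqxx.
exists a'; split.
  by move=> _ /imsetP [j jJ ->]; rewrite Ea //; apply: Ha.
move=> k; rewrite big_imset /=; last by move=> x y _ _; apply: hinj.
rewrite (eq_bigr (fun j => a j * g (h j) k)); first exact: Hs.
by move=> j jJ; rewrite Ea.
Qed.
Arguments restrict {n d A m t t'}.


Lemma union_zs n d A t (g : 'I_t -> Zn_d n d) (I1 I2 : {set 'I_t}) :
  [disjoint I1 & I2] -> A_zero_sum A g I1 -> A_zero_sum A g I2 ->
  A_zero_sum A g (I1 :|: I2).
Proof.
move=> dis [a1 [Ha1 S1]] [a2 [Ha2 S2]].
exists (fun i => if i \in I1 then a1 i else a2 i); split.
  move=> i; rewrite in_setU; case: ifP => [iI _|iI /= iI2]; [exact: Ha1| exact: Ha2].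
move=> k.
rewrite (eq_bigl [predU I1 & I2]); last by move=> i; rewrite in_setU.
rewrite bigU //=; apply: dvdn_add.
  rewrite (eq_bigr (fun i => a1 i * g i k)); first exact: S1.
  by move=> i ->.
rewrite (eq_bigr (fun i => a2 i * g i k)); first exact: S2.
move=> i iI2; case: ifP => // iI1.
by rewrite (disjointFr dis iI1) in iI2.
Qed.
Arguments union_zs {n d A t g I1 I2}.


Lemma extract n d A sA t (Hs : len_prop n d A n sA) (le : n <= sA)
  (g : 'I_t -> Zn_d n d) : forall k (U : {set 'I_t}), k * n + sA <= #|U| ->
  exists I : {set 'I_t}, I \subset U /\ #|I| = k.+1 * n /\ A_zero_sum A g I.
Proof.
elim=> [|k IH] U HU.
  have [I [sI [cI zI]]] := restrict Hs g U (leq_trans (leq_addl _ _) HU).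
  by exists I; rewrite mul1n.
have [I1 [sI1 [cI1 zI1]]] := restrict Hs g U (leq_trans (leq_addl _ _) HU).
have HU' : k * n + sA <= #|U :\: I1|.
  rewrite cardsD (setIidPr sI1) cI1; move: HU; rewrite mulSn; lia.
have [I2 [sI2 [cI2 zI2]]] := IH _ HU'.
have dis : [disjoint I1 & I2].
  rewrite -setI_eq0; apply/eqP/setP => i; rewrite !inE.
  apply/negP => /andP [i1 i2]; move/subsetP: sI2 => /(_ i i2).
  by rewrite in_setD i1.
exists (I1 :|: I2); split.
  by rewrite subUset sI1 (subset_trans sI2) // subsetDl.
split; last exact: union_zs.
rewrite cardsU (disjoint_setI0 dis) cards0 cI1 cI2 mulSn; lia.
Qed.
Arguments extract {n d A sA t}.


Lemma monotone n d A m t t' : len_prop n d A m t -> t <= t' -> len_prop n d A m t'.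
Proof.
move=> Hp le g.
have H : t <= #|[set: 'I_t']| by rewrite cardsT card_ord.
have [I [_ [cI zI]]] := restrict Hp g setT H.
by exists I.
Qed.
Arguments monotone {n d A m t t'}.


Theorem lemma3p1 (n d : nat) (A : seq nat) (dA sA ZSA : nat) :
  1 <= n -> 1 <= d ->
  A != [::] -> (forall a, a \in A -> 1 <= a <= n) ->
  is_dA n d A dA -> is_sA n d A sA -> is_ZSA n d A ZSA ->
  sA = dA + n - 1 ->
  ZSA = dA + n ^ d - 1.
Proof.
move=> Hn Hd _ _ [dA0 [HdA mindA]] [sA0 [HsA minsA]] [Z0 [HZ minZ]] EsA.
case: d Hd HdA mindA HsA minsA HZ minZ => [//|d'] _ HdA mindA HsA minsA HZ minZ.
have N0 : 0 < n ^ d' by rewrite expn_gt0 Hn.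
set N := n ^ d' in N0.
have ENd : n ^ d'.+1 = N * n by rewrite expnSr.
rewrite ENd in HZ minZ *.
apply/eqP; rewrite eqn_leq; apply/andP; split.
  apply: minZ; first lia.
  move=> g.
  have le : n <= sA by lia.
  have H : N.-1 * n + sA <= #|[set: 'I_(dA + N * n - 1)]|.
    rewrite cardsT card_ord; nia.
  have [I [_ [cI zI]]] := extract HsA le g N.-1 setT H.
  exists I; split=> //; rewrite cI; congr (_ * _); lia.
rewrite leqNgt; apply/negP => lt.
pose m1 := dA.-1. pose m2 := (N * n).-1.
have HZ' : len_prop n d'.+1 A (N * n) (m1 + m2).
  apply: monotone HZ _; rewrite /m1 /m2; nia.
pose z : 'I_n := Ordinal Hn.
pose zf : Zn_d n d'.+1 := [ffun _ => z].
have [g0 Hg0] : exists g0 : 'I_m1 -> Zn_d n d'.+1,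
    forall J, J != set0 -> ~ A_zero_sum A g0 J.
  case E : m1 => [|m1'].
    exists (fun _ => zf) => J /set0Pn [[j Hj] _]; by rewrite ltn0 in Hj.
  have ndA : ~ dA_prop n d'.+1 A m1.
    move=> H; have := mindA m1; rewrite E => /(_ isT); rewrite -E => /(_ H).
    rewrite /m1; lia.
  rewrite -E; apply: NNPP => C; apply: ndA => g0.
  apply: NNPP => C2; apply: C; exists g0 => J J0 zJ; apply: C2; by exists J.
pose g (i : 'I_(m1 + m2)) := match split i with inl j => g0 j | inr _ => zf end.
have [I [cI [a [Ha Hs]]]] := HZ' g.
pose J := [set j | lshift m2 j \in I].
apply: (Hg0 J).
  apply/set0Pn; apply: NNPP => C.
  have sub : I \subset [set rshift m1 j | j in 'I_m2].
    apply/subsetP => i iI; rewrite -(splitK i).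
    case E : (split i) => [j|j] /=.
      exfalso; apply: C; exists j; rewrite inE.
      by rewrite -[lshift _ _]/(unsplit (inl _ j)) -E splitK.
    by apply: imset_f.
  have := subset_leq_card sub; have := leq_imset_card (@rshift m1 m2) 'I_m2.
  have : 0 < N * n by rewrite muln_gt0 N0 Hn.
  rewrite cI card_ord /m2 => P H1 H2; have := leq_trans H2 H1; lia.
exists (fun j => a (lshift m2 j)); split.
  by move=> j; rewrite inE => /Ha.
move=> k; have := Hs k.
rewrite big_mkcond big_split_ord /=.
rewrite [X in _ + X]big1; last first.
  move=> j _; case: ifP => // _.
  by rewrite /g -[rshift _ _]/(unsplit (inr _ j)) unsplitK /zf ffunE /z /= muln0.
rewrite addn0 [in X in _ -> X]big_mkcond /=.
congr (_ %| _); apply: eq_bigr => j _; rewrite inE; case: ifP => // _.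
by rewrite /g -[lshift _ _]/(unsplit (inl _ j)) unsplitK.
Qed.
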